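(* Let $\mathcal P_1$ be a shortest path and $\mathcal P_2$ another path, both between nodes $u_0$ and $u_1$, and write $\delta=\delta_{\mathrm{worst}}(G)$. Define $$\eta_{\mathcal P_1,\mathcal P_2}=(6\delta+2)\log_2\Big((6\mu+2)(6\delta+2)\log_2\big[(6\delta+2)(3\mu+1)\mu\big]+\mu\Big)$$ if $\mathcal P_2$ is $\mu$-approximate short, and $$\eta_{\mathcal P_1,\mathcal P_2}=(6\delta+2)\log_2\Big(8(6\delta+2)\log_2\big[(6\delta+2)(4+2\varepsilon)\big]+1+\tfrac{\varepsilon}{2}\Big)$$ if $\mathcal P_2$ is $\varepsilon$-additive-approximate short. Then: (a) for every node $v$ on $\mathcal P_1$ there is a node $v'$ on $\mathcal P_2$ with $d_{v,v'}\le\lfloor\eta_{\mathcal P_1,\mathcal P_2}\rfloor$; (b) for every node $v'$ on $\mathcal P_2$ there is a node $v$ on $\mathcal P_1$ with $d_{v,v'}\le\zeta_{\mathcal P_1,\mathcal P_2}$, where $\zeta_{\mathcal P_1,\mathcal P_2}=\min\{\lfloor(\mu+1)\eta_{\mathcal P_1,\mathcal P_2}+\mu/2\rfloor,\ \lfloor \mu\, d_{u_0,u_1}/2\rfloor\}$ if $\mathcal P_2$ is $\mu$-approximate short, and $\zeta_{\mathcal P_1,\mathcal P_2}=\min\{\lfloor 2\eta_{\mathcal P_1,\mathcal P_2}+(1+\varepsilon)/2\rfloor,\ \lfloor (d_{u_0,u_1}+\varepsilon)/2\rfloor\}$ if $\mathcal P_2$ is $\varepsilon$-additive-approximate short.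
   Context: $G=(V,E)$ is a finite connected undirected graph with $n\ge 4$ nodes and $d_{u,v}$ denotes the shortest-path distance (number of edges); $\ell(\mathcal P)$ denotes the number of edges of a path $\mathcal P$. For any four nodes $w_1,w_2,w_3,w_4$, form the three sums $d_{w_1,w_2}+d_{w_3,w_4}$, $d_{w_1,w_3}+d_{w_2,w_4}$, $d_{w_1,w_4}+d_{w_2,w_3}$, order them as $S\le M\le L$, and set $\delta_{w_1,w_2,w_3,w_4}=(L-M)/2$; $\delta_{\mathrm{worst}}(G)=\max_{w_1,w_2,w_3,w_4\in V}\delta_{w_1,w_2,w_3,w_4}$. A path $(w_0,w_1,\dots,w_k)$ is $\mu$-approximate short (with $\mu\ge1$) if for all $0\le i<j\le k$ the length of its subpath from $w_i$ to $w_j$ is at most $\mu\, d_{w_i,w_j}$. It is $\varepsilon$-additive-approximate short (with $\varepsilon\ge0$) if its length is at most $d_{w_0,w_k}+\varepsilon$. *)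

(* Defs.v *)
From Stdlib Require Import Reals ZArith.
From mathcomp Require Import all_boot.
Open Scope R_scope.

Set Implicit Arguments.
Unset Strict Implicit.
Unset Printing Implicit Defensive.

Section Graph.
Variables (T : finType) (e : rel T).

Definition walkb (u v : T) (k : nat) : bool :=
  [exists p : k.-tuple T, path e u p && (last u p == v)].

(* shortest-path distance d_{u,v}: least k < |V| with a k-edge walk from u to v
   (for a connected graph such a k always exists) *)
Definition gdist (u v : T) : nat := find (walkb u v) (iota 0 #|T|).

(* A path  (w_0, ..., w_k) is represented as  w_0 :: p  with  path e w_0 p,
   it has  l = size p  edges; it is a path between u0 and u1 if w_0 = u0 and
   last u0 p = u1; paths have no repeated nodes. *)
Definition is_path (u0 u1 : T) (p : seq T) : Prop :=
  path e u0 p /\ last u0 p = u1 /\ uniq (u0 :: p).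

Definition is_shortest_path (u0 u1 : T) (p : seq T) : Prop :=
  is_path u0 u1 p /\ size p = gdist u0 u1.

(* twice the four-point quantity: L - M for the three pair-sums *)
Definition two_delta4 (w1 w2 w3 w4 : T) : nat :=
  let s1 := (gdist w1 w2 + gdist w3 w4)%N in
  let s2 := (gdist w1 w3 + gdist w2 w4)%N in
  let s3 := (gdist w1 w4 + gdist w2 w3)%N in
  let L := maxn s1 (maxn s2 s3) in
  let S := minn s1 (minn s2 s3) in
  let M := (s1 + s2 + s3 - L - S)%N in
  (L - M)%N.

Definition two_delta_worst : nat :=
  \max_(w : T * T * T * T) two_delta4 w.1.1.1 w.1.1.2 w.1.2 w.2.

Definition delta_worst : R := (INR two_delta_worst / 2).

Definition mu_approx_short (mu : R) (u0 : T) (p : seq T) : Prop :=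
  forall i j : nat, (i < j)%N -> (j <= size p)%N ->
    (INR (j - i)%N <= mu * INR (gdist (nth u0 (u0 :: p) i) (nth u0 (u0 :: p) j))).

Definition eps_additive_short (eps : R) (u0 : T) (p : seq T) : Prop :=
  (INR (size p) <= INR (gdist u0 (last u0 p)) + eps).

End Graph.

Definition log2 (x : R) : R := (ln x / ln 2).

Definition floorR (x : R) : Z := Int_part x.

Definition eta_mu (delta mu : R) : R :=
  ((6 * delta + 2) *
   log2 ((6 * mu + 2) * (6 * delta + 2) *
           log2 ((6 * delta + 2) * (3 * mu + 1) * mu) + mu)).

Definition eta_eps (delta eps : R) : R :=
  ((6 * delta + 2) *
   log2 (8 * (6 * delta + 2) * log2 ((6 * delta + 2) * (4 + 2 * eps))
         + 1 + eps / 2)).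

Definition zeta_mu (eta mu : R) (d : nat) : Z :=
  Z.min (floorR ((mu + 1) * eta + mu / 2)) (floorR (mu * INR d / 2)).

Definition zeta_eps (eta eps : R) (d : nat) : Z :=
  Z.min (floorR (2 * eta + (1 + eps) / 2)) (floorR ((INR d + eps) / 2)).

(* Main.v *)
Require Import Defs.
From Stdlib Require Import Reals ZArith.
From mathcomp Require Import all_boot.
Open Scope R_scope.
From Stdlib Require Import Lra Lia Psatz.
From mathcomp Require Import zify.

Lemma INR_addn a b : INR (a + b)%N = INR a + INR b.
Proof. exact: plus_INR. Qed.
Lemma INR_muln a b : INR (a * b)%N = INR a * INR b.
Proof. exact: mult_INR. Qed.
Lemma INR_leq a b : (a <= b)%N -> INR a <= INR b.
Proof. move/leP; exact: le_INR. Qed.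
Lemma INR_ltn a b : (a < b)%N -> INR a < INR b.
Proof. move/ltP; exact: lt_INR. Qed.
Lemma INR_exp2 n : INR (2 ^ n)%N = 2 ^ n.
Proof. elim: n => [|n IH] //=; rewrite expnS INR_muln IH /=; lra. Qed.

Lemma ln_le' x y : 0 < x -> x <= y -> ln x <= ln y.
Proof. move=> hx [h|->]; [left; exact: ln_increasing|lra]. Qed.

Lemma ln_le_sub1 z : 0 < z -> ln z <= z - 1.
Proof. move=> hz; have := exp_ineq1_le (ln z); rewrite exp_ln //; lra. Qed.

Lemma ln2_pos : 0 < ln 2.
Proof. have := ln_lt_2; lra. Qed.

Lemma log2_ge1 b : 2 <= b -> 1 <= log2 b.
Proof.
move=> hb; rewrite /log2; have h2 := ln2_pos.
have := ln_le' 2 b ltac:(lra) hb => h.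
apply (Rmult_le_reg_r (ln 2)) => //. field_simplify; lra.
Qed.

Lemma log2_ge3 b : 8 <= b -> 3 <= log2 b.
Proof.
move=> hb; rewrite /log2; have h2 := ln2_pos.
have := ln_le' (2^3) b ltac:(lra) ltac:(simpl; lra) => h.
rewrite ln_pow in h; last lra.
apply (Rmult_le_reg_r (ln 2)) => //. field_simplify; simpl in h; lra.
Qed.

Lemma log2_le_sq b : 2 <= b -> log2 b <= b ^ 2.
Proof.
move=> hb; rewrite /log2; have h2 := ln_lt_2.
have := ln_le_sub1 b ltac:(lra) => h.
apply (Rmult_le_reg_r (ln 2)); first lra. field_simplify; last lra.
nra.
Qed.

Lemma realA (t k N D0 : nat) (al be b : R) :
  (2 * D0 <= k * t + 2)%N -> (0 < k -> 2 ^ k.-1 < N)%N ->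
  INR N <= al * INR D0 + be -> 0 < al -> 0 <= be -> 2 <= b ->
  2 * (al * ((6 * (INR t / 2) + 2) * log2 b) + be) <= b ^ 6 ->
  INR D0 <= (6 * (INR t / 2) + 2) * log2 b.
Proof.
move=> HD Hk HN Hal Hbe Hb Hb6.
have L2 := ln_lt_2.
have lb1 := log2_ge1 b Hb.
have t0 := pos_INR t.
set y := (6 * (INR t / 2) + 2) * log2 b.
have Hy : 3 * INR t + 2 <= y by rewrite /y; nra.
have HX : 2 * INR D0 <= INR k * INR t + 2.
  have := INR_leq _ _ HD; rewrite INR_muln INR_addn INR_muln /=; lra.
case: (posnP k) => [k0|kpos].
  rewrite k0 /= in HX; lra.
have HN2 := INR_ltn _ _ (Hk kpos). rewrite INR_exp2 in HN2.
set X := INR D0 in HX HN HN2 *.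
have X0 : 0 <= X by apply pos_INR.
set u := al * X + be in HN.
have hk1 : INR k = INR k.-1 + 1.
  rewrite -{1}(prednK kpos) -addn1 INR_addn /=; lra.
have Hlnu : INR k.-1 * ln 2 < ln u.
  rewrite -ln_pow; last lra.
  apply ln_increasing; first (apply pow_lt; lra). lra.
apply Rnot_lt_le => Hyx.
have ypos : 0 < y by lra.
set w := al * y + be.
have wpos : 0 < w by rewrite /w; nra.
have p2k : 0 < 2 ^ k.-1 by apply pow_lt; lra.
have upos : 0 < u by lra.
have Hlnuw : ln u <= ln w + (u / w - 1).
  have := ln_le_sub1 (u / w) ltac:(apply Rdiv_lt_0_compat; lra).
  have iw : 0 < / w by apply Rinv_0_lt_compat.
  rewrite /Rdiv ln_mult // ln_Rinv //; lra.
have Hlnw : ln w <= 6 * ln b - ln 2.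
  have : ln (2 * w) <= ln (b ^ 6).
    apply ln_le'. lra. rewrite /w /y; lra.
  rewrite ln_mult ?ln_pow //; try lra; simpl; lra.
have Hyl : y * ln 2 = (3 * INR t + 2) * ln b.
  rewrite /y /log2; field; lra.
have lnb2 : ln 2 <= ln b by apply ln_le'; lra.
have Huw : u / w - 1 = al * (X - y) / w.
  have -> : u = w + al * (X - y) by rewrite /u /w; ring.
  field; lra.
have Hr : INR t * (al * (X - y) / w) <= X - y.
  have : INR t * al <= w by rewrite /w; nra.
  move=> h. rewrite /Rdiv.
  have hw : 0 < / w by apply Rinv_0_lt_compat.
  have : INR t * al * / w <= 1.
    apply (Rmult_le_reg_r w) => //. rewrite Rmult_assoc Rinv_l; lra.
  nra.
rewrite Huw in Hlnuw.
have H1 : 2 * X * ln 2 <= INR k * INR t * ln 2 + 2 * ln 2 by nra.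
have H2 : INR k * ln 2 < ln u + ln 2 by rewrite hk1; lra.
have H3 : INR k * INR t * ln 2 <= INR t * (ln u + ln 2) by nra.
nra.
Qed.

Lemma inst_mu (t : nat) (mu : R) : 1 <= mu ->
  let D := 6 * (INR t / 2) + 2 in
  let b := (6 * mu + 2) * D * log2 (D * (3 * mu + 1) * mu) + mu in
  2 <= b /\ 2 * ((6 * mu + 2) * (D * log2 b) + 0) <= b ^ 6.
Proof.
move=> Hmu D b. have t0 := pos_INR t.
have HD : 2 <= D by rewrite /D; lra.
have HL : 3 <= log2 (D * (3 * mu + 1) * mu).
  apply log2_ge3. have h4 : 4 <= (3 * mu + 1) * mu by nra.
  rewrite Rmult_assoc; nra.
have Hb : 3 * ((6 * mu + 2) * D) <= b.
  have P : 0 <= (6 * mu + 2) * D by nra.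
  rewrite /b. move: HL. set L := log2 _ => HL. nra.
have Hb2 : 2 <= b by nra.
split => //.
have := log2_le_sq b Hb2 => hl. have := log2_ge1 b Hb2 => hl1.
have h3 : 2 * ((6 * mu + 2) * D) * log2 b <= b ^ 3 by simpl; nra.
have : b ^ 3 <= b ^ 6.
  have : 1 <= b ^ 3 by simpl; nra.
  move=> h; have -> : b ^ 6 = b ^ 3 * b ^ 3 by ring. nra.
nra.
Qed.

Lemma inst_eps (t : nat) (eps : R) : 0 <= eps ->
  let D := 6 * (INR t / 2) + 2 in
  let b := 8 * D * log2 (D * (4 + 2 * eps)) + 1 + eps / 2 in
  2 <= b /\ 2 * (8 * (D * log2 b) + eps) <= b ^ 6.
Proof.
move=> He D b. have t0 := pos_INR t.
have HD : 2 <= D by rewrite /D; lra.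
have HL : 3 <= log2 (D * (4 + 2 * eps)) by apply log2_ge3; nra.
have Hb : 3 * (8 * D) <= b.
  rewrite /b. move: HL. set L := log2 _ => HL. nra.
have Hb2 : 2 <= b by nra.
have Hbe : eps <= 2 * b.
  rewrite /b. move: HL. set L := log2 _ => HL. nra.
split => //.
have := log2_le_sq b Hb2 => hl. have := log2_ge1 b Hb2 => hl1.
have h3 : 2 * (8 * D) * log2 b <= b ^ 3 by simpl; nra.
have h4 : 4 * b <= b ^ 3 by simpl; nra.
have : 2 * b ^ 3 <= b ^ 6.
  have : 2 <= b ^ 3 by simpl; nra.
  move=> h; have -> : b ^ 6 = b ^ 3 * b ^ 3 by ring. nra.
nra.
Qed.

Lemma floor_ge (z : Z) x : IZR z <= x -> (z <= floorR x)%Z.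
Proof.
move=> h; rewrite /floorR /Int_part.
have [h1 h2] := archimed x.
have : (z < up x)%Z by apply lt_IZR; lra.
lia.
Qed.

Lemma nat_floor (n : nat) x : INR n <= x -> (Z.of_nat n <= floorR x)%Z.
Proof. rewrite INR_IZR_INZ; exact: floor_ge. Qed.

Set Implicit Arguments.
Unset Strict Implicit.
Section G.
Variables (T : finType) (e : rel T).
Hypothesis e_sym : symmetric e.
Hypothesis e_conn : forall u v : T, connect e u v.

Local Notation d := (gdist e).

Definition ewalk (f : nat -> T) (k : nat) := forall i, (i < k)%N -> e (f i) (f i.+1).

Lemma walkb_fun u v k : walkb e u v k ->
  exists f, [/\ f 0%N = u, f k = v & ewalk f k].
Proof.
move/existsP=> [p /andP[Hp /eqP Hl]].
exists (fun i => nth u (u :: p) i); split => //.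
  by rewrite -Hl -[last u p]/(last u (u :: p)) -nth_last /= size_tuple.
move=> i Hi; move/(pathP u): Hp => Hp; apply: Hp; by rewrite size_tuple.
Qed.

Lemma fun_walkb f k : ewalk f k -> walkb e (f 0%N) (f k) k.
Proof.
move=> Hf; apply/existsP.
have Hs : size (map f (iota 1 k)) == k by rewrite size_map size_iota.
exists (Tuple Hs) => /=; apply/andP; split.
  apply/(pathP (f 0%N)) => i; rewrite size_map size_iota => Hi.
  have -> : nth (f 0%N) (f 0%N :: map f (iota 1 k)) i = f i.
    case: i Hi => [|i] Hi //=; rewrite (nth_map 0%N) ?size_iota ?nth_iota ?add1n //; lia.
  rewrite (nth_map 0%N) ?size_iota ?nth_iota ?add1n //; exact: Hf.
case: k Hf Hs => [|k] Hf Hs //=.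
rewrite -[last _ _]/(last (f 0%N) (f 0%N :: map f (iota 1 k.+1))) -nth_last /=.
rewrite size_map size_iota; change (nth (f 0%N) (map f (iota 1 k.+1)) k == f k.+1).
by rewrite (nth_map 0%N) ?size_iota ?nth_iota // add1n.
Qed.

Lemma has_walk u v : has (walkb e u v) (iota 0 #|T|).
Proof.
have /connectP [p Hp Hl] := e_conn u v.
rewrite Hl; case: (shortenP Hp) => p' Hp' Hu _.
apply/hasP; exists (size p').
  rewrite mem_iota add0n /=.
  have := max_card (mem (u :: p')); move/card_uniqP: Hu => -> /=; done.
apply/existsP; exists (in_tuple p'); by rewrite /= Hp' eqxx.
Qed.

Lemma gdist_walk u v : walkb e u v (d u v).
Proof.
have H := nth_find 0%N (has_walk u v).
have Hlt : (find (walkb e u v) (iota 0 #|T|) < #|T|)%N.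
  by have := has_find (walkb e u v) (iota 0 #|T|); rewrite has_walk size_iota.
by rewrite nth_iota ?add0n in H.
Qed.

Lemma gdist_min u v k : walkb e u v k -> (d u v <= k)%N.
Proof.
move=> Hk; rewrite leqNgt; apply/negP => Hlt.
have := before_find 0%N Hlt.
have Hlt2 : (find (walkb e u v) (iota 0 #|T|) <= #|T|)%N.
  by have := find_size (walkb e u v) (iota 0 #|T|); rewrite size_iota.
rewrite nth_iota ?add0n ?Hk //. rewrite /gdist in Hlt; lia.
Qed.

Lemma dist_fun u v : exists f, [/\ f 0%N = u, f (d u v) = v & ewalk f (d u v)].
Proof. exact: walkb_fun (gdist_walk u v). Qed.

Lemma fun_dist f k : ewalk f k -> (d (f 0%N) (f k) <= k)%N.
Proof. move/fun_walkb; exact: gdist_min. Qed.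

Definition catf (f g : nat -> T) a := fun i => if (i <= a)%N then f i else g (i - a)%N.

Lemma gdist_tri u v w : (d u w <= d u v + d v w)%N.
Proof.
have [f [f0 f1 fw]] := dist_fun u v.
have [g [g0 g1 gw]] := dist_fun v w.
have H : ewalk (catf f g (d u v)) (d u v + d v w).
  move=> i Hi; rewrite /catf /=.
  case: (ltngtP i (d u v)) => Hc.
    exact: fw.
    have -> : (i.+1 - d u v = (i - d u v).+1)%N by lia.
    apply: gw; lia.
  have -> : (i.+1 - d u v = 1)%N by lia.
  rewrite Hc f1 -g0; apply: gw; lia.
have E0 : catf f g (d u v) 0 = u by rewrite /catf leq0n.
have E1 : catf f g (d u v) (d u v + d v w) = w.
  rewrite /catf; case: ifP => h.
    have dvw0 : d v w = 0%N by lia.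
    by rewrite dvw0 addn0 f1 -g1 dvw0 g0.
  by rewrite addKn g1.
by have := fun_dist H; rewrite E0 E1.
Qed.

Lemma gdist_sym u v : d u v = d v u.
Proof.
suff H : forall u v, (d u v <= d v u)%N by apply/eqP; rewrite eqn_leq !H.
move=> x y; have [f [f0 f1 fw]] := dist_fun y x.
have H : ewalk (fun i => f (d y x - i)%N) (d y x).
  move=> i Hi; rewrite e_sym.
  have -> : (d y x - i = (d y x - i.+1).+1)%N by lia.
  apply: fw; lia.
have := fun_dist H; by rewrite subn0 subnn f0 f1.
Qed.

Lemma gdist0 u : d u u = 0%N.
Proof. have := @fun_dist (fun _ => u) 0 (fun i (h : (i < 0)%N) => match notF h with end). by rewrite leqn0 => /eqP. Qed.

Lemma gdist_eq0 u v : d u v = 0%N -> u = v.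
Proof. have [f [f0 f1 _]] := dist_fun u v => h. by rewrite h f0 in f1. Qed.

Lemma gdist_edge u v : e u v -> (d u v <= 1)%N.
Proof.
move=> h; have := @fun_dist (fun i => if i is 0 then u else v) 1.
apply; move=> [|i] //.
Qed.


Definition dwalk (f : nat -> T) n := forall i, (i < n)%N -> (d (f i) (f i.+1) <= 1)%N.

Lemma dwalk_le f n i j : dwalk f n -> (i <= j)%N -> (j <= n)%N -> (d (f i) (f j) <= j - i)%N.
Proof.
move=> Hf Hij Hjn; elim: j Hij Hjn => [|j IH] Hij Hjn.
  by rewrite leqn0 in Hij; rewrite (eqP Hij) gdist0.
case: (ltngtP i j.+1) => Hc; last by rewrite Hc gdist0.
  have := IH Hc (ltnW Hjn); have := Hf j Hjn; have := gdist_tri (f i) (f j) (f j.+1); lia.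
lia.
Qed.

Lemma ewalk_dwalk f n : ewalk f n -> dwalk f n.
Proof. move=> H i Hi; exact: gdist_edge (H i Hi). Qed.

Lemma geo_fun x y : exists f, [/\ f 0%N = x, f (d x y) = y, dwalk f (d x y) &
  forall j, (j <= d x y)%N -> d x (f j) = j /\ d (f j) y = (d x y - j)%N].
Proof.
have [f [f0 f1 fw]] := dist_fun x y.
have Hd := ewalk_dwalk fw.
exists f; split => // j Hj.
have h1 := dwalk_le Hd (leq0n j) Hj.
have h2 := dwalk_le Hd Hj (leqnn _).
rewrite f0 subn0 in h1; rewrite f1 in h2.
have := gdist_tri x (f j) y. lia.
Qed.

Definition tw := two_delta_worst e.

Lemma fourpt x y z w : (d x z + d y w <= maxn (d x y + d z w) (d x w + d y z) + tw)%N.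
Proof.
have H : (two_delta4 e x y z w <= tw)%N.
  exact: (@leq_bigmax _ (fun q : T * T * T * T => two_delta4 e q.1.1.1 q.1.1.2 q.1.2 q.2) (x, y, z, w)).
move: H; rewrite /two_delta4 /=. lia.
Qed.

Definition gp w a b := (d a w + d b w - d a b)%N.

Lemma gp_fp x y z w : (minn (gp w x y) (gp w y z) <= gp w x z + tw)%N.
Proof.
have := fourpt x y z w.
have := gdist_tri x w y; have := gdist_tri y w z; have := gdist_tri x w z.
rewrite /gp (gdist_sym w y) (gdist_sym w z). lia.
Qed.

Lemma chain w k : forall f n, (0 < n)%N -> (n <= 2 ^ k)%N ->
  exists2 i, (i < n)%N & (gp w (f i) (f i.+1) <= gp w (f 0%N) (f n) + k * tw)%N.
Proof.
elim: k => [|k IH] f n Hn Hk.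
  have -> : n = 1%N by rewrite expn0 in Hk; lia.
  by exists 0%N; rewrite ?mul0n ?addn0.
case: (leqP n (2 ^ k)) => Hnk.
  have [i Hi H] := IH f n Hn Hnk; exists i => //; lia.
set m := (2 ^ k)%N.
have m0 : (0 < m)%N by rewrite expn_gt0.
have Hnm : (n - m <= 2 ^ k)%N by rewrite expnS in Hk; rewrite /m; lia.
have [i1 Hi1 H1] := IH f m m0 (leqnn _).
have [i2 Hi2 H2] := IH (fun j => f (m + j)%N) (n - m)%N ltac:(lia) Hnm.
have Hfp := gp_fp (f 0%N) (f m) (f n) w.
rewrite addn0 subnKC in H2; last lia.
case: (leqP (gp w (f 0%N) (f m)) (gp w (f m) (f n))) => Hc.
  exists i1; first lia. rewrite mulSn; lia.
exists (m + i2)%N; first lia. rewrite -addnS mulSn; lia.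
Qed.

Lemma keyA f n k v : dwalk f n -> (d (f 0%N) v + d v (f n) = d (f 0%N) (f n))%N ->
  (n <= 2 ^ k)%N -> exists2 i, (i <= n)%N & (2 * d (f i) v <= k * tw + 2)%N.
Proof.
move=> Hf Hg Hn.
case: (posnP n) => [n0|npos].
  exists 0%N => //. rewrite n0 gdist0 in Hg. rewrite (gdist_sym v) in Hg. lia.
have [i Hi H] := chain v f npos Hn.
exists i; first lia.
move: H; rewrite /gp (gdist_sym v (f n)) in Hg *.
have := Hf i Hi; have := gdist_tri (f i) (f i.+1) v. lia.
Qed.

End G.

Section P.
Variables (T : finType) (e : rel T).
Hypothesis e_sym : symmetric e.
Hypothesis e_conn : forall u v : T, connect e u v.
Variables (u0 u1 : T) (p1 p2 : seq T).
Hypothesis Hp1 : is_shortest_path e u0 u1 p1.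
Hypothesis Hp2 : is_path e u0 u1 p2.

Local Notation d := (gdist e).
Let tri := gdist_tri e_conn.
Let sym := gdist_sym e_sym e_conn.
Let dle := dwalk_le e_conn.
Let eq0 := gdist_eq0 e_conn.
Let geo := geo_fun e_conn.
Let kA := keyA e_sym e_conn.
Definition cp (p : seq T) i := nth u0 (u0 :: p) i.
Local Notation c1 := (cp p1).
Local Notation c2 := (cp p2).
Local Notation n1 := (size p1).
Local Notation K := (size p2).

Lemma path_dwalk p : is_path e u0 u1 p -> dwalk e (cp p) (size p).
Proof.
move=> [Hp _] i Hi; apply: gdist_edge. by move/(pathP u0): Hp => /(_ i Hi).
Qed.

Lemma path_end p : is_path e u0 u1 p -> cp p (size p) = u1.
Proof. move=> [_ [Hl _]]; by rewrite /cp; rewrite -Hl -[last u0 p]/(last u0 (u0 :: p)) -nth_last. Qed.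

Lemma path_mem p v : v \in u0 :: p -> exists2 i, (i <= size p)%N & cp p i = v.
Proof. by move/(nthP u0) => [i Hi Hv]; exists i. Qed.

Lemma c1_dist i j : (i <= j)%N -> (j <= n1)%N -> d (c1 i) (c1 j) = (j - i)%N.
Proof.
move=> Hij Hj.
have Hw := path_dwalk Hp1.1.
have h1 := dle Hw Hij Hj.
have h2 := dle Hw (leq0n i) (leq_trans Hij Hj).
have h3 := dle Hw Hj (leqnn _).
have Hn : d (c1 0%N) u1 = n1 by rewrite Hp1.2.
rewrite path_end ?subn0 in h3; last exact: Hp1.1.
have := tri (c1 0%N) (c1 i) (c1 j); have := tri (c1 0%N) (c1 j) u1.
rewrite subn0 in h2; lia.
Qed.

Lemma c2_dwalk : dwalk e c2 K.
Proof. exact: path_dwalk. Qed.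

Lemma c2_le i j : (i <= j)%N -> (j <= K)%N -> (d (c2 i) (c2 j) <= j - i)%N.
Proof. move=> h1 h2; exact: dle c2_dwalk h1 h2. Qed.

Lemma c1_0 : c1 0%N = u0. Proof. by []. Qed.
Lemma c2_0 : c2 0%N = u0. Proof. by []. Qed.
Lemma c1_end : c1 n1 = u1. Proof. exact: path_end Hp1.1. Qed.
Lemma c2_end : c2 K = u1. Proof. exact: path_end Hp2. Qed.

Lemma catf_dwalk (f g : nat -> T) a b : dwalk e f a -> dwalk e g b -> f a = g 0%N ->
  dwalk e (catf f g a) (a + b).
Proof.
move=> fw gw fg i Hi; rewrite /catf /=.
case: (ltngtP i a) => Hc.
- exact: fw.
- have -> : (i.+1 - a = (i - a).+1)%N by lia. apply: gw; lia.
- have -> : (i.+1 - a = 1)%N by lia. rewrite Hc fg; apply: gw; lia.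
Qed.

Lemma catf0 (f g : nat -> T) a : catf f g a 0%N = f 0%N.
Proof. by rewrite /catf leq0n. Qed.

Lemma catf_end (f g : nat -> T) a b : f a = g 0%N -> catf f g a (a + b) = g b.
Proof.
move=> fg; rewrite /catf; case: ifP => h.
  have -> : b = 0%N by lia. by rewrite addn0.
by rewrite addKn.
Qed.

Variable phi : R -> R.
Hypothesis phi_mono : forall x y, (x <= y)%R -> (phi x <= phi y)%R.
Hypothesis phi_nonneg : forall x, (0 <= x)%R -> (0 <= phi x)%R.
Hypothesis SB : forall s t, (s <= t)%N -> (t <= K)%N ->
  (INR (t - s) <= phi (INR (d (c2 s) (c2 t))))%R.

Lemma seg s t : (s <= K)%N -> (t <= K)%N -> exists L F, [/\ F 0%N = c2 s, F L = c2 t,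
  dwalk e F L, (forall j, (j <= L)%N -> exists2 r, (r <= K)%N & F j = c2 r) &
  (INR L <= phi (INR (d (c2 s) (c2 t))))%R].
Proof.
move=> Hs Ht; case: (leqP s t) => Hst.
  exists (t - s)%N, (fun j => c2 (s + j)%N); split => //=.
  - by rewrite addn0.
  - by rewrite subnKC.
  - move=> j Hj /=; rewrite addnS; apply: c2_dwalk; lia.
  - move=> j Hj; exists (s + j)%N => //; lia.
  - exact: SB.
exists (s - t)%N, (fun j => c2 (s - j)%N); split => //=.
- by rewrite subn0.
- by rewrite subKn // ltnW.
- move=> j Hj; rewrite sym.
  have -> : (s - j = (s - j.+1).+1)%N by lia.
  apply: c2_dwalk; lia.
- move=> j Hj; exists (s - j)%N => //; lia.
- rewrite sym; apply: SB => //; exact: ltnW.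
Qed.


Lemma gdist_leT u v : (d u v <= #|T|)%N.
Proof. by rewrite /gdist; have := find_size (walkb e u v) (iota 0 #|T|); rewrite size_iota. Qed.

Lemma partA_core : exists D0 k N : nat,
  [/\ (forall i, (i <= n1)%N -> exists2 s, (s <= K)%N & (d (c1 i) (c2 s) <= D0)%N),
      (2 * D0 <= k * tw e + 2)%N, (0 < k -> 2 ^ k.-1 < N)%N &
      (INR N <= 2 * INR D0 + phi (6 * INR D0))%R].
Proof.
pose P := fun D : nat => [forall i : 'I_n1.+1, [exists s : 'I_K.+1, (d (c1 i) (c2 s) <= D)%N]].
have exP : exists D, P D.
  exists #|T|; apply/forallP => i; apply/existsP; exists ord0; exact: gdist_leT.
case: (ex_minnP exP) => D0 PD0 minD0.
have HD0 : forall i, (i <= n1)%N -> exists2 s, (s <= K)%N & (d (c1 i) (c2 s) <= D0)%N.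
  move=> i Hi; have /existsP [s Hs] := (forallP PD0) (@Ordinal n1.+1 i Hi).
  by exists s => //; have := ltn_ord s.
exists D0.
case: (posnP D0) => [D00|D0pos].
  exists 0%N, 0%N; split => //.
  - by rewrite D00.
  - rewrite D00 /=. have h := phi_nonneg (Rle_refl 0). rewrite !Rmult_0_r. lra.
have notP : ~~ P D0.-1 by apply/negP => h; have := minD0 _ h; lia.
move/forallPn: notP => [[i0 Hi0] /= /existsPn Hfar].
have Far : forall r, (r <= K)%N -> (D0 <= d (c1 i0) (c2 r))%N.
  move=> r Hr; have := Hfar (@Ordinal K.+1 r Hr); rewrite /= -ltnNge; lia.
set a := (i0 - 2 * D0)%N. set b := minn (i0 + 2 * D0) n1.
have [s Hs [Hsa Hsa0]] : exists2 s, (s <= K)%N &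
    ((d (c1 a) (c2 s) <= D0)%N /\ (a = 0%N -> d (c1 a) (c2 s) = 0%N)).
  case: (posnP a) => [a0|apos].
    by exists 0%N => //; rewrite a0 /cp /= gdist0.
  have [s Hs H] := HD0 a ltac:(lia). by exists s => //; split => // h; lia.
have [t Ht [Htb Htb0]] : exists2 t, (t <= K)%N &
    ((d (c2 t) (c1 b) <= D0)%N /\ (b = n1 -> d (c2 t) (c1 b) = 0%N)).
  case: (eqVneq b n1) => [bn|bn].
    by exists K => //; rewrite bn c1_end c2_end gdist0.
  have [t Ht H] := HD0 b ltac:(lia). by exists t => //; rewrite sym; split => // h; rewrite h eqxx in bn.
have [g1 [g10 g11 g1w g1g]] := geo (c1 a) (c2 s).
have [L [F [F0 F1 Fw Fin FL]]] := seg Hs Ht.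
have [g2 [g20 g21 g2w g2g]] := geo (c2 t) (c1 b).
set m1 := d (c1 a) (c2 s) in g11 g1w g1g Hsa Hsa0.
set m2 := d (c2 t) (c1 b) in g21 g2w g2g Htb Htb0.
pose H := catf g1 (catf F g2 L) m1.
have Hw : dwalk e H (m1 + (L + m2)).
  apply: catf_dwalk => //. apply: catf_dwalk => //. by rewrite F1 g20.
  by rewrite catf0 F0 g11.
have H0 : H 0%N = c1 a by rewrite /H catf0 g10.
have HN : H (m1 + (L + m2))%N = c1 b.
  by rewrite /H catf_end ?catf_end ?catf0 ?F1 ?g20 ?F0 ?g11.
set Nn := (m1 + (L + m2))%N in Hw HN.
have exK : exists k, (Nn <= 2 ^ k)%N by exists Nn; apply: ltnW; apply: ltn_expl.
case: (ex_minnP exK) => k Hk mink.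
exists k, Nn; split => //.
- have Hgeo : (d (H 0%N) (c1 i0) + d (c1 i0) (H Nn) = d (H 0%N) (H Nn))%N.
    rewrite H0 HN !c1_dist; lia.
  have [j Hj Hjd] := kA Hw Hgeo Hk.
  suff : (D0 <= d (H j) (c1 i0))%N by lia.
  rewrite /H /catf; case: ifP => hj1.
    have [ha hb] := g1g j hj1.
    have := tri (c2 s) (g1 j) (c1 i0); have := tri (c1 a) (g1 j) (c1 i0).
    have := Far s Hs. rewrite (sym (c2 s) (g1 j)) (sym (c2 s) (c1 i0)) hb ha c1_dist; try lia.
  case: ifP => hj2.
    have [r Hr ->] := Fin _ hj2. rewrite sym; exact: Far.
  set j' := (j - m1 - L)%N.
  have hj' : (j' <= m2)%N by rewrite /j' /Nn in Hj *; lia.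
  have [ha hb] := g2g j' hj'.
  have := tri (c2 t) (g2 j') (c1 i0); have := tri (c1 b) (g2 j') (c1 i0).
  have := Far t Ht. rewrite (sym (c1 b) (g2 j')) (sym (c1 b) (c1 i0)) hb ha c1_dist; try lia.
- move=> kpos; rewrite ltnNge; apply/negP => h; have := mink _ h; lia.
- rewrite /Nn !INR_addn.
  have h1 := INR_leq _ _ Hsa. have h2 := INR_leq _ _ Htb.
  have hd : (d (c2 s) (c2 t) <= 6 * D0)%N.
    have := tri (c2 s) (c1 a) (c2 t); have := tri (c1 a) (c1 b) (c2 t).
    rewrite (sym (c2 s) (c1 a)) (sym (c1 b) (c2 t)) c1_dist; try lia.
      have e6 : INR 6 = 6%R by simpl; ring.
  have := phi_mono (INR_leq _ _ hd). rewrite INR_muln e6.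
  lra.
Qed.

Lemma INR_le_nat a b : (a <= b)%N -> (INR a <= INR b)%R.
Proof. exact: INR_leq. Qed.

Lemma pair_bound E i i' s s' j : (i <= n1)%N -> (i' <= n1)%N -> (s <= j)%N -> (j <= s')%N ->
  (s' <= K)%N -> (d (c1 i) (c2 s) <= E)%N -> (d (c1 i') (c2 s') <= E)%N ->
  (d (c2 s) (c2 s') <= 2 * E + 1)%N ->
  exists2 i'', (i'' <= n1)%N & (INR (d (c1 i'') (c2 j)) <= INR E + phi (INR (2 * E + 1)) / 2)%R.
Proof.
move=> Hi Hi' Hsj Hjs Hs' H1 H2 H3.
have hs := SB (leq_trans Hsj Hjs) Hs'.
have hphi := phi_mono (INR_leq _ _ H3).
case: (leqP (2 * (j - s)) (s' - s)) => Hc.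
  exists i => //.
  have := tri (c1 i) (c2 s) (c2 j); have := c2_le Hsj (leq_trans Hjs Hs') => h4 h5.
  have h6 : (2 * d (c1 i) (c2 j) <= 2 * E + (s' - s))%N by lia.
  have := INR_leq _ _ h6; rewrite INR_addn !INR_muln /= => h7; lra.
exists i' => //.
have := tri (c1 i') (c2 s') (c2 j); have := c2_le Hjs Hs' => h4 h5.
rewrite (sym (c2 s') (c2 j)) in h5.
have h6 : (2 * d (c1 i') (c2 j) <= 2 * E + (s' - s))%N by lia.
have := INR_leq _ _ h6; rewrite INR_addn !INR_muln /= => h7; lra.
Qed.

Lemma partB_core E : (forall i, (i <= n1)%N -> exists2 s, (s <= K)%N & (d (c1 i) (c2 s) <= E)%N) ->
  forall j, (j <= K)%N ->
  exists2 i, (i <= n1)%N & (INR (d (c1 i) (c2 j)) <= INR E + phi (INR (2 * E + 1)) / 2)%R.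
Proof.
move=> HE j Hj.
suff : forall m i s, (i + m = n1)%N -> (s <= j)%N -> (d (c1 i) (c2 s) <= E)%N ->
  exists2 i, (i <= n1)%N & (INR (d (c1 i) (c2 j)) <= INR E + phi (INR (2 * E + 1)) / 2)%R.
  move=> H; apply: (H n1 0%N 0%N) => //. by rewrite /cp /= gdist0.
elim=> [|m IH] i s Him Hsj Hd.
  rewrite addn0 in Him; subst i.
  apply: (@pair_bound E n1 n1 s K j) => //.
  - by rewrite c1_end c2_end gdist0.
  - have := tri (c2 s) (c1 n1) (c2 K). rewrite c1_end c2_end gdist0 -c1_end (sym (c2 s)). lia.
have [s' Hs' Hd'] := HE i.+1 ltac:(lia).
case: (leqP s' j) => Hc.
  apply: (IH i.+1 s') => //; lia.
apply: (@pair_bound E i i.+1 s s' j) => //; try lia.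
have := tri (c2 s) (c1 i) (c2 s'); have := tri (c1 i) (c1 i.+1) (c2 s').
rewrite c1_dist; try lia. rewrite (sym (c2 s) (c1 i)). lia.
Qed.

End P.

Section P2.
Variables (T : finType) (e : rel T).
Hypothesis e_sym : symmetric e.
Hypothesis e_conn : forall u v : T, connect e u v.
Variables (u0 u1 : T) (p1 p2 : seq T).
Hypothesis Hp1 : is_shortest_path e u0 u1 p1.
Hypothesis Hp2 : is_path e u0 u1 p2.

Lemma triv j : (j <= size p2)%N ->
  exists2 i, (i <= size p1)%N & (2 * gdist e (cp u0 p1 i) (cp u0 p2 j) <= size p2)%N.
Proof.
move=> Hj.
have h1 := c2_le e_conn Hp2 (leq0n j) Hj.
have h2 := c2_le e_conn Hp2 Hj (leqnn _).
case: (leqP (2 * j) (size p2)) => Hc.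
  exists 0%N => //. have -> : cp u0 p1 0 = cp u0 p2 0 by []. lia.
exists (size p1) => //. rewrite (c1_end Hp1) -(c2_end Hp2) (gdist_sym e_sym e_conn). lia.
Qed.

End P2.

Unset Implicit Arguments.

Theorem theorem6 (T : finType) (e : rel T)
    (e_sym : symmetric e) (e_irr : irreflexive e)
    (e_conn : forall u v : T, connect e u v)
    (n_ge4 : (4 <= #|T|)%N)
    (u0 u1 : T) (p1 p2 : seq T)
    (Hp1 : is_shortest_path e u0 u1 p1) (Hp2 : is_path e u0 u1 p2)
    (mu eps : R) (Hmu : (1 <= mu)) (Heps : (0 <= eps)) :
  (mu_approx_short e mu u0 p2 ->
     (forall v, v \in u0 :: p1 -> exists2 v', v' \in u0 :: p2 &
        (Z.of_nat (gdist e v v') <= floorR (eta_mu (delta_worst e) mu))%Z) /\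
     (forall v', v' \in u0 :: p2 -> exists2 v, v \in u0 :: p1 &
        (Z.of_nat (gdist e v v') <=
           zeta_mu (eta_mu (delta_worst e) mu) mu (gdist e u0 u1))%Z)) /\
  (eps_additive_short e eps u0 p2 ->
     (forall v, v \in u0 :: p1 -> exists2 v', v' \in u0 :: p2 &
        (Z.of_nat (gdist e v v') <= floorR (eta_eps (delta_worst e) eps))%Z) /\
     (forall v', v' \in u0 :: p2 -> exists2 v, v \in u0 :: p1 &
        (Z.of_nat (gdist e v v') <=
           zeta_eps (eta_eps (delta_worst e) eps) eps (gdist e u0 u1))%Z)).
Proof.
have c2mem : forall s, (s <= size p2)%N -> cp u0 p2 s \in u0 :: p2.
  by move=> s Hs; rewrite /cp; apply: mem_nth.
have c1mem : forall s, (s <= size p1)%N -> cp u0 p1 s \in u0 :: p1.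
  by move=> s Hs; rewrite /cp; apply: mem_nth.
have Hd : gdist e u0 u1 = gdist e (cp u0 p2 0) (cp u0 p2 (size p2)) by rewrite (c2_end Hp2).
rewrite /delta_worst. set t := two_delta_worst e.
have Ht : tw e = t by [].
have pick : forall j (A B : R), (j <= size p2)%N ->
    (exists2 i, (i <= size p1)%N & INR (gdist e (cp u0 p1 i) (cp u0 p2 j)) <= A) ->
    (exists2 i, (i <= size p1)%N & INR (gdist e (cp u0 p1 i) (cp u0 p2 j)) <= B) ->
    exists2 v, v \in u0 :: p1 &
      (Z.of_nat (gdist e v (cp u0 p2 j)) <= Z.min (floorR A) (floorR B))%Z.
  move=> j A B Hj [i1 Hi1 H1] [i2 Hi2 H2].
  case: (leqP (gdist e (cp u0 p1 i1) (cp u0 p2 j)) (gdist e (cp u0 p1 i2) (cp u0 p2 j))) => Hc.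
    exists (cp u0 p1 i1); first exact: c1mem.
    apply: Z.min_glb; apply: nat_floor => //.
    have := INR_leq _ _ Hc; lra.
  exists (cp u0 p1 i2); first exact: c1mem.
  apply: Z.min_glb; apply: nat_floor => //.
  have := INR_leq _ _ (ltnW Hc); lra.
split.
- move=> Hmu2.
  pose phi := fun x => mu * x.
  have Hmono : forall x y, x <= y -> phi x <= phi y.
    move=> x y h; rewrite /phi; apply: Rmult_le_compat_l => //; lra.
  have Hnn : forall x, 0 <= x -> 0 <= phi x by move=> x h; rewrite /phi; nra.
  have HSB : forall s t0, (s <= t0)%N -> (t0 <= size p2)%N ->
      INR (t0 - s) <= phi (INR (gdist e (cp u0 p2 s) (cp u0 p2 t0))).
    move=> s t0 h1 h2; case: (ltngtP s t0) => h.
    + exact: Hmu2.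
    + lia.
    + rewrite h subnn /phi /=; have := pos_INR (gdist e (cp u0 p2 t0) (cp u0 p2 t0)); nra.
  have [D0 [k [N [HD HDk Hk HN]]]] := partA_core e_sym e_conn Hp1 Hp2 Hmono Hnn HSB.
  have [Hb2 Hb6] := @inst_mu t mu Hmu.
  have HD0 : INR D0 <= eta_mu (INR t / 2) mu.
    apply: (@realA t k N D0 (6 * mu + 2) 0 _ HDk Hk) => //; try lra.
    rewrite /phi in HN; lra.
  split.
  + move=> v /path_mem [i Hi <-].
    have [s Hs Hds] := HD i Hi.
    exists (cp u0 p2 s); first exact: c2mem.
    apply: nat_floor; have := INR_leq _ _ Hds; lra.
  + move=> v' /path_mem [j Hj <-].
    rewrite /zeta_mu; apply: pick => //.
    * have [i Hi H] := partB_core e_sym e_conn Hp1 Hp2 Hmono HSB HD Hj.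
      exists i => //. rewrite /phi INR_addn INR_muln /= in H.
      have := pos_INR D0; nra.
    * have [i Hi H] := triv e_sym e_conn Hp1 Hp2 Hj.
      exists i => //.
      have HK : INR (size p2) <= mu * INR (gdist e u0 u1).
        case: (posnP (size p2)) => hK.
          rewrite hK /=; have := pos_INR (gdist e u0 u1); nra.
        have := Hmu2 0%N (size p2) hK (leqnn _). rewrite subn0 -/(cp u0 p2 0) -/(cp u0 p2 (size p2)) -Hd //.
      have := INR_leq _ _ H; rewrite INR_muln /=; lra.
- move=> Heps2.
  pose phi := fun x => x + eps.
  have Hmono : forall x y, x <= y -> phi x <= phi y by move=> x y h; rewrite /phi; lra.
  have Hnn : forall x, 0 <= x -> 0 <= phi x by move=> x h; rewrite /phi; lra.
  have HK : INR (size p2) <= INR (gdist e u0 u1) + eps.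
    by move: Heps2; rewrite /eps_additive_short Hp2.2.1.
  have HSB : forall s t0, (s <= t0)%N -> (t0 <= size p2)%N ->
      INR (t0 - s) <= phi (INR (gdist e (cp u0 p2 s) (cp u0 p2 t0))).
    move=> s t0 h1 h2.
    have := c2_le e_conn Hp2 (leq0n s) (leq_trans h1 h2).
    have := c2_le e_conn Hp2 h2 (leqnn _).
    have := gdist_tri e_conn (cp u0 p2 0) (cp u0 p2 s) (cp u0 p2 (size p2)).
    have := gdist_tri e_conn (cp u0 p2 s) (cp u0 p2 t0) (cp u0 p2 (size p2)).
    rewrite -Hd => q1 q2 q3 q4.
    have q : (t0 - s + gdist e u0 u1 <= size p2 + gdist e (cp u0 p2 s) (cp u0 p2 t0))%N.
      move: q1 q2 q3 q4; rewrite subn0 /cp /=. lia.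
    have := INR_leq _ _ q; rewrite !INR_addn /phi; lra.
  have [D0 [k [N [HD HDk Hk HN]]]] := partA_core e_sym e_conn Hp1 Hp2 Hmono Hnn HSB.
  have [Hb2 Hb6] := @inst_eps t eps Heps.
  have HD0 : INR D0 <= eta_eps (INR t / 2) eps.
    apply: (@realA t k N D0 8 eps _ HDk Hk) => //; try lra.
    rewrite /phi in HN; lra.
  split.
  + move=> v /path_mem [i Hi <-].
    have [s Hs Hds] := HD i Hi.
    exists (cp u0 p2 s); first exact: c2mem.
    apply: nat_floor; have := INR_leq _ _ Hds; lra.
  + move=> v' /path_mem [j Hj <-].
    rewrite /zeta_eps; apply: pick => //.
    * have [i Hi H] := partB_core e_sym e_conn Hp1 Hp2 Hmono HSB HD Hj.
      exists i => //. rewrite /phi INR_addn INR_muln /= in H.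
      lra.
    * have [i Hi H] := triv e_sym e_conn Hp1 Hp2 Hj.
      exists i => //.
      have := INR_leq _ _ H; rewrite INR_muln /=; lra.
Qed.
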